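(* Let $H$ be a graph with $n$ vertices and at least $n+1$ edges. Then $H$ contains a cycle of length at most $\frac{2n}{3}+1$.
   Context: Graphs may contain loops and parallel edges; a loop is a cycle of length 1 and two parallel edges form a cycle of length 2. *)

(* Defs.v *)
From mathcomp Require Import all_boot all_order all_algebra.
Set Implicit Arguments. Unset Strict Implicit. Unset Printing Implicit Defensive.

(* A (multi)graph: finite vertex type V, finite edge type E, and an endpoint
   map [ends : E -> V * V] (the pair is read as unordered).  Loops
   ([ends e = (x, x)]) and parallel edges (distinct edges with the same
   endpoints) are allowed. *)

Definition joins (V E : finType) (ends : E -> V * V) (e : E) (x y : V) : bool :=
  (ends e == (x, y)) || (ends e == (y, x)).

(* For k = 1 this is a loop, for k = 2 a pair of
   parallel edges, for k >= 3 an ordinary cycle. *)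
Definition is_cycle (V E : finType) (ends : E -> V * V) (k : nat)
    (vs : 'I_k -> V) (es : 'I_k -> E) : Prop :=
  (0 < k)%N /\ injective vs /\ injective es /\
  forall i : 'I_k, joins ends (es i) (vs i) (vs (ordS i)).

(* Main.v *)
Require Import Defs.
From mathcomp Require Import all_boot all_order all_algebra.
From mathcomp Require Import zify.
From mathcomp Require Import lra.
Import Order.TTheory GRing.Theory Num.Theory.

Lemma joinsC (V E : finType) (ends : E -> V * V) e x y :
  joins ends e x y = joins ends e y x.
Proof. by rewrite /joins orbC. Qed.

Lemma joins2 {V E : finType} {ends : E -> V * V} {e x y x' y'} :
  joins ends e x y -> joins ends e x' y' ->
  (x = x' /\ y = y') \/ (x = y' /\ y = x').
Proof.
rewrite /joins => /orP[] /eqP -> /orP[] /eqP [-> ->]; by [left|right].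
Qed.

Lemma cycle_leD (V E : finType) (ends : E -> V * V) (D : {set E}) k
  (vs : 'I_k -> V) (es : 'I_k -> E) :
  is_cycle ends vs es -> (forall i, es i \in D) -> (k <= #|D|)%N.
Proof.
move=> [_ [_ [ies _]]] inD.
have <- : #|es @: [set: 'I_k]| = k by rewrite card_imset // cardsT card_ord.
apply: subset_leq_card; apply/subsetP => x /imsetP[i _ ->]; exact: inD.
Qed.

Definition deg (V E : finType) (ends : E -> V * V) (v : V) (e : E) : nat :=
  ((ends e).1 == v) + ((ends e).2 == v).
Arguments deg {V E}.

Definition is_path (V E : finType) (ends : E -> V * V) (D : {set E})
  (p : nat) (pv : nat -> V) (pe : nat -> E) :=
  (forall i j, (i <= p)%N -> (j <= p)%N -> pv i = pv j -> i = j) /\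
  (forall i, (i < p)%N -> pe i \in D /\ joins ends (pe i) (pv i) (pv i.+1)).
Arguments is_path {V E}.

Lemma path_bound {V E : finType} {ends : E -> V * V} {D : {set E}} {p pv pe} :
  is_path ends D p pv pe -> (p < #|V|)%N.
Proof.
move=> [inj _].
have : injective (fun i : 'I_p.+1 => pv i).
  move=> i j /inj h; apply: val_inj; apply: h; rewrite -ltnS //.
by move/leq_card; rewrite card_ord.
Qed.

Lemma path_pe_inj {V E : finType} {ends : E -> V * V} {D : {set E}} {p pv pe a b} :
  is_path ends D p pv pe -> (a < p)%N -> (b < p)%N -> pe a = pe b -> a = b.
Proof.
move=> [inj J] ha hb e.
have [_ ja] := J a ha; have [_ jb] := J b hb.
rewrite e in ja.
case: (joins2 ja jb) => [[h1 h2]|[h1 h2]].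
  by apply: (inj _ _ _ _ h1); lia.
have := inj a b.+1 (ltnW ha) ltac:(lia) h1.
have := inj a.+1 b ha ltac:(lia) h2.
lia.
Qed.

Lemma cycle_of_even (V E : finType) (ends : E -> V * V) (D : {set E}) :
  D != set0 ->
  (forall v, ~~ odd (\sum_(e in D) deg ends v e)) ->
  exists k (vs : 'I_k -> V) (es : 'I_k -> E),
    is_cycle ends vs es /\ (forall i, es i \in D).
Proof.
move=> D0 par.
case: (boolP [exists e in D, (ends e).1 == (ends e).2]).
  case/exists_inP => e eD /eqP le.
  exists 1, (fun _ => (ends e).1), (fun _ => e).
  split=> //; split=> //; split.
    by move=> i j _; rewrite (ord1 i) (ord1 j).
  split; first by move=> i j _; rewrite (ord1 i) (ord1 j).
  by move=> i; rewrite /joins; move: le; case: (ends e) => a b /= ->; rewrite eqxx.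
move/exists_inPn => noloop.
suff main : forall d p pv pe, (p + d = #|V|)%N -> (0 < p)%N ->
    is_path ends D p pv pe ->
    exists k (vs : 'I_k -> V) (es : 'I_k -> E),
      is_cycle ends vs es /\ (forall i, es i \in D).
  case/set0Pn: D0 => e eD.
  apply: (main (#|V| - 1)%N 1 (fun i => if i == 0%N then (ends e).1 else (ends e).2) (fun _ => e)).
  - have : (1 <= #|V|)%N by apply/card_gt0P; exists (ends e).1.
    lia.
  - by [].
  split.
    move=> [|[|i]] [|[|j]] //= _ _ h; by move: (noloop e eD); rewrite h eqxx.
  move=> [|i] // _; split=> //; rewrite /joins /=; apply/orP; left.
  by case: (ends e).
elim=> [|d IH] p pv pe hd hp P.
  by have := path_bound P; lia.
set vp := pv p.
set e0 := pe p.-1.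
have [e0D je0] : e0 \in D /\ joins ends e0 (pv p.-1) (pv p) by case: P => _ J; have := J p.-1 ltac:(lia); rewrite prednK.
have hne : pv p.-1 != pv p.
  apply/eqP => h; case: P => inj _; have := inj _ _ (leq_pred p) (leqnn p) h; lia.
have deg0 : deg ends vp e0 = 1%N.
  move: je0 hne; rewrite /joins /deg /vp => /orP[] /eqP -> /=.
    by rewrite eqxx eq_sym => /negbTE ->.
  by rewrite eqxx => /negbTE ->.
have [f /andP[/andP[fD fne] fdeg]|none] :=
  pickP [pred f | (f \in D) && (f != e0) && (0 < deg ends vp f)%N].
  2: { have := par vp; rewrite (bigD1 e0) //= deg0 big1 //.
       move=> f /andP[fD fne]; have := none f; rewrite /= fD fne /=.
       by case: (deg ends vp f). }
pose w := if (ends f).1 == vp then (ends f).2 else (ends f).1.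
have [jf wne] : joins ends f vp w /\ w != vp.
  move: fdeg (noloop f fD); rewrite /deg /w /joins.
  case: (ends f) => a b /=.
  case: (eqVneq a vp) => [->|ha] /=; first by rewrite eqxx /= => _ nb; rewrite eq_sym.
  case: (eqVneq b vp) => [->|hb] //= _ _; by rewrite eqxx orbT.
case: (boolP [exists j : 'I_p.+1, pv j == w]).
- case/existsP => -[j hj] /= /eqP pj.
  have jp : (j < p)%N.
    rewrite ltn_neqAle -ltnS hj andbT; apply/eqP => h; move: wne.
    by rewrite -pj h eqxx.
  case: P => inj J.
  exists (p - j).+1, (fun i => pv (j + i)),
    (fun i : 'I_(p - j).+1 => if (i : nat) == (p - j)%N then f else pe (j + i)%N).
  split; last first.
    move=> i; case: ifP => // /eqP hi; have [] := J (j + i)%N => //.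
    have := ltn_ord i; lia.
  split=> //; split.
    move=> a b /= h; apply: ord_inj; have := ltn_ord a; have := ltn_ord b => ha hb.
    have := inj (j + a)%N (j + b)%N ltac:(lia) ltac:(lia) h; lia.
  split.
    move=> a b /=; have := ltn_ord a; have := ltn_ord b => ha hb.
    have fnot : forall c, (c < p - j)%N -> f <> pe (j + c)%N.
      move=> c hc fe.
      have [_ jc] := J (j + c)%N ltac:(lia).
      rewrite -fe in jc.
      case: (eqVneq (j + c).+1 p) => hcp.
        by move: fne; rewrite fe /e0 -hcp /= eqxx.
      case: (joins2 jf jc) => [[h1 h2]|[h1 h2]].
        have := inj p (j + c)%N (leqnn p) ltac:(lia) h1; lia.
      have := inj p (j + c).+1 (leqnn p) ltac:(lia) h1; lia.
    case: eqP => ea; case: eqP => eb.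
    + by move=> _; apply: ord_inj; rewrite ea eb.
    + by move=> h; exfalso; apply: (fnot b) => //; lia.
    + by move=> h; exfalso; apply: (fnot a) => //; lia.
    + move=> h; apply: ord_inj; have := @path_pe_inj _ _ _ _ _ _ _ (j + a)%N (j + b)%N (conj inj J) ltac:(lia) ltac:(lia) h.
      lia.
  move=> i /=; case: eqP => hi.
    have -> : (i.+1 %% (p - j).+1 = 0)%N by rewrite hi modnn.
    by rewrite addn0 pj hi subnKC ?(ltnW jp).
  have := ltn_ord i => hi2.
  rewrite modn_small; last lia.
  have [_ ] := J (j + i)%N ltac:(lia).
  by rewrite addnS.
- move/existsPn => notin.
  apply: (IH p.+1 (fun i => if i == p.+1 then w else pv i)
                 (fun i => if i == p then f else pe i)) => //.
    lia.
  case: P => inj J; split.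
    move=> i j hi hj /=.
    case: eqP => ei; case: eqP => ej.
    + by rewrite ei ej.
    + move=> h; exfalso; move: (notin (Ordinal (n:=p.+1) (m:=j) ltac:(lia))).
      by rewrite /= h eqxx.
    + move=> h; exfalso; move: (notin (Ordinal (n:=p.+1) (m:=i) ltac:(lia))).
      by rewrite /= h eqxx.
    + by apply: inj; lia.
  move=> i hi /=.
  case: eqP => ei.
    by rewrite ei (ltn_eqF (ltnSn p)) eqxx; split.
  have -> : (i.+1 == p.+1) = false by apply/eqP; lia.
  have -> : (i == p.+1) = false by apply/eqP; lia.
  apply: J; lia.
Qed.

Section F2.
Local Open Scope ring_scope.

Lemma F2cases (a : 'F_2) : a = 0 \/ a = 1.
Proof. case: a => [[|[|m]]] H; [left|right|by []]; exact: val_inj. Qed.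
Lemma F2_11 : (1 + 1 : 'F_2) = 0. Proof. apply: val_inj. by []. Qed.
Lemma F2_10 : (1 : 'F_2) != 0. Proof. by []. Qed.
Lemma F2_eq (a b : 'F_2) : a + b = 0 -> a = b.
Proof. by case: (F2cases a) => ->; case: (F2cases b) => -> //; rewrite ?add0r ?addr0 => // /eqP; rewrite ?F2_10. Qed.
Lemma F2_supp (a b : 'F_2) : ((a != 0%R) + (b != 0%R) + ((a + b)%R != 0%R) <= 2)%N.
Proof. by case: (F2cases a) => ->; case: (F2cases b) => ->; rewrite ?F2_11 ?addr0 ?add0r ?eqxx ?F2_10. Qed.
Lemma F2nat (N : nat) : (N%:R : 'F_2) = (odd N)%:R.
Proof.
elim: N => [|N IH] //; rewrite mulrS IH /=; case: (odd N) => /=.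
  by rewrite F2_11.
by rewrite addr0.
Qed.
End F2.

Lemma card_set_sum (I : finType) (P : pred I) : #|[set i | P i]| = (\sum_i (P i : nat))%N.
Proof.
rewrite -sum1_card big_mkcond /=; apply: eq_bigr => i _; rewrite inE; by case: (P i).
Qed.

Theorem lemma3p2 (V E : finType) (ends : E -> V * V) :
  (#|V| + 1 <= #|E|)%N ->
  exists (k : nat) (vs : 'I_k -> V) (es : 'I_k -> E),
    is_cycle ends vs es /\
    ((k%:R : rat) <= 2%:R * (#|V|%:R) / 3%:R + 1)%R.
Proof.
move=> hE.
set n := #|V|.
have hE' : (n.+1 <= #|E|)%N by rewrite -addn1.
have n0 : (0 < n)%N.
  have : (0 < #|E|)%N by lia.
  case/card_gt0P => e _; apply/card_gt0P; by exists (ends e).1.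
pose g (i : 'I_n.+1) : E := enum_val (widen_ord hE' i).
have ginj : injective g.
  move=> a b /enum_val_inj h; apply: val_inj; exact: (congr1 val h).
pose A : 'M['F_2]_(n.+1, n) := (\matrix_(i < n.+1, j < n) ((deg ends (enum_val j) (g i))%:R))%R.
have sum1 : forall x : V, (\sum_(j < n) ((x == enum_val j) : nat) = 1)%N.
  move=> x; rewrite (bigD1 (enum_rank x)) //= enum_rankK eqxx big1 //.
  move=> j hj; apply/eqP; rewrite eqb0; apply: contra hj => /eqP ->.
  by rewrite enum_valK.
have rowsum : forall i, (\sum_j A i j = 0)%R.
  move=> i; under eq_bigr do rewrite mxE.
  by rewrite -natr_sum F2nat /deg big_split /= !sum1.
Local Open Scope ring_scope.
pose c : 'cV['F_2]_n := const_mx 1%R.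
have Ac : (A *m c = 0)%R.
  apply/matrixP => i k; rewrite !mxE -[RHS](rowsum i); apply: eq_bigr => j _.
  by rewrite !mxE mulr1.
have rA : (\rank A <= n.-1)%N.
  have h1 : (c^T <= kermx A^T)%MS by apply/sub_kermxP; rewrite -trmx_mul Ac trmx0.
  have h2 : (1 <= \rank c^T)%N.
    rewrite lt0n mxrank_eq0; apply/eqP => /matrixP /(_ 0%R (Ordinal n0)).
    by rewrite !mxE.
  have := mxrankS h1; rewrite mxrank_ker mxrank_tr; rewrite mxrank_tr in h2; move: h2; rewrite !mxrank_tr; lia.
have rK : (2 <= \rank (kermx A))%N by rewrite mxrank_ker; lia.
set K := kermx A.
have [i1 [i2 /and3P[n1 n2 n12]]] : exists i1 i2,
    [&& row i1 K != 0%R, row i2 K != 0%R & row i1 K != row i2 K].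
  case: (boolP [exists i1, exists i2, [&& row i1 K != 0%R, row i2 K != 0%R & row i1 K != row i2 K]]).
    by case/existsP => i1 /existsP[i2 h]; exists i1, i2.
  move/existsPn => none; exfalso.
  case: (boolP [exists i, row i K != 0%R]); last first.
    move/existsPn => z.
    have : K = 0%R.
      apply/row_matrixP => i; rewrite row0; exact/eqP/negPn/z.
    by move=> K0; move: rK; rewrite -/K K0 mxrank0.
  case/existsP => i0 h0.
  have : (K <= row i0 K)%MS.
    apply/row_subP => i; case: (eqVneq (row i K) 0%R) => [->|hi]; first exact: sub0mx.
    have := none i0; move/existsPn/(_ i); rewrite h0 hi /= => /negPn/eqP <-.
    exact: submx_refl.
  move/mxrankS; have := rank_leq_row (row i0 K); move: rK; rewrite -/K; lia.
have inK : forall i, (row i K *m A = 0)%R.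
  move=> i; apply/sub_kermxP; exact: row_sub.
pose supp (r : 'rV['F_2]_n.+1) := #|[set i | r 0 i != 0]|.
set r1 := row i1 K; set r2 := row i2 K.
have s3 : (supp r1 + supp r2 + supp (r1 + r2)%R <= 2 * n.+1)%N.
  rewrite /supp !card_set_sum -!big_split /=.
  apply: (@leq_trans (\sum_(i < n.+1) 2)%N); last by rewrite sum_nat_const card_ord mulnC.
  apply: leq_sum => i _.
  have -> : (r1 + r2)%R 0 i = r1 0 i + r2 0 i by rewrite mxE.
  exact: F2_supp.
have n3 : r1 + r2 != 0.
  apply: contra n12 => /eqP h; apply/eqP/rowP => j.
  by apply: F2_eq; have := congr1 (fun M : 'rV['F_2]_n.+1 => M 0 j) h; rewrite !mxE.
have key : forall w : 'rV['F_2]_n.+1, w != 0 -> w *m A = 0 -> (3 * supp w <= 2 * n + 2)%N ->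
  exists (k : nat) (vs : 'I_k -> V) (es : 'I_k -> E),
    is_cycle ends vs es /\ ((k%:R : rat) <= 2%:R * (n%:R) / 3%:R + 1)%R.
  move=> w w0 wA hs.
  set D := [set i | w 0 i != 0].
  have wD : forall i, w 0 i = (i \in D)%:R.
    by move=> i; rewrite inE; case: (F2cases (w 0 i)) => ->; rewrite ?eqxx ?F2_10.
  have D0 : D != set0.
    apply: contra w0 => /eqP D0; apply/eqP/rowP => i. by rewrite wD D0 in_set0 [RHS]mxE.
  have par : forall v, ~~ odd (\sum_(e in D) deg (fun i => ends (g i)) v e).
    move=> v; have := congr1 (fun M : 'rV['F_2]_n => M 0 (enum_rank v)) wA; rewrite !mxE.
    move=> h.
    have {h} : (\sum_j (((j \in D) * deg ends v (g j))%N)%:R = 0 :> 'F_2).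
      apply: (etrans _ h); apply: eq_bigr => j _; by rewrite mxE enum_rankK wD natrM.
    rewrite -natr_sum F2nat.
    suff -> : (\sum_(e in D) deg (fun i => ends (g i)) v e = \sum_i ((i \in D) * deg ends v (g i)))%N.
      by case: (odd _) => // /eqP; rewrite (negbTE F2_10).
    rewrite big_mkcond; apply: eq_bigr => i _; by case: (i \in D); rewrite ?mul1n ?mul0n.
  have [k [vs [es [cyc inD]]]] := @cycle_of_even _ _ _ _ D0 par.
  have kD := @cycle_leD _ _ _ _ _ _ _ cyc inD.
  exists k, vs, (fun i => g (es i)); split.
    case: cyc => k0 [iv [ie J]]; split=> //; split=> //; split; [exact: inj_comp | exact: J].
  have eD : #|D| = supp w by [].
  have h : (3 * k <= 2 * n + 2)%N by lia.
  have h' : ((3 * k)%:R <= (2 * n + 2)%:R :> rat) by rewrite ler_nat.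
  rewrite !natrM !natrD in h'.
  lra.
case: (leqP (supp r1) (supp r2)) => h12; case: (leqP (supp r1) (supp (r1 + r2)%R)) => h13;
  case: (leqP (supp r2) (supp (r1 + r2)%R)) => h23.
all: first [ by apply: (key r1 n1 (inK i1)); lia
           | by apply: (key r2 n2 (inK i2)); lia
           | apply: (key (r1 + r2) n3); [by rewrite mulmxDl inK inK addr0 | lia] ].
Qed.
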